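(* Let $n=2^t$, let $L$ be a Latin cube of order $n$ that is isomorphic to the Boolean Latin cube of order $n$, and let $A$ be an $(m,m,m,m)$-cube of order $n$. Let $\alpha,\gamma,\kappa,\theta,\epsilon$ be constants with $\epsilon n\geq 3$ and $$\alpha n-21\kappa n -7\epsilon n-\frac{84\kappa}{\epsilon}n-\frac{21\theta}{\epsilon} n-\frac{80\kappa}{\theta} n-28>0.$$ Suppose that: (a) no row of $L$ contains more than $\kappa n$ conflicts with $A$; (b) no column of $L$ contains more than $\kappa n$ conflicts with $A$; (c) no file of $L$ contains more than $\kappa n$ conflicts with $A$; (d) no symbol-set of $L$ contains more than $\kappa n$ conflicts with $A$; (e) no transversal-set of $L$ contains more than $\kappa n$ conflicts with $A$; (f) each cell of $L$ belongs to at least $\alpha n$ allowed $3$-cubes. Then there is a set of pairwise disjoint allowed $3$-cubes of $L$ such that each conflict of $L$ with $A$ belongs to one of them; consequently, swapping on all these $3$-cubes yields a Latin cube $L'$ that avoids $A$.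
   Context: Cells of a cube of order $n$ are triples $(i,j,k)\in[n]^3$. A row is $\{(i,j^*,k):j^*\in[n]\}$, a column $\{(i^*,j,k):i^*\in[n]\}$, a file $\{(i,j,k^* ):k^*\in[n]\}$. Row layer $i$ is $\{(i,j^*,k^* )\}$, column layer $j$ is $\{(i^*,j,k^* )\}$, file layer $k$ is $\{(i^*,j^*,k)\}$. An $(m,m,m,m)$-cube of order $n$ is a cube $A$ with $A(i,j,k)\subseteq[n]$ for each cell, each cell containing at most $m$ symbols and each symbol occurring at most $m$ times in each row, each column and each file. A Latin cube $L$ of order $n$ has one symbol $L(i,j,k)\in[n]$ in each cell with each symbol exactly once in every row, column and file. Let $a_x$ be the $x$-th smallest element of $\mathbb{Z}_2^t$, $x=1,\dots,2^t$. The Boolean Latin cube $B$ of order $n=2^t$ has $B(i,j,k)=x$ where $a_x=a_i+a_j+a_k$ in $\mathbb{Z}_2^t$. $L$ is isomorphic to $B$ if $L$ is obtained from $B$ by permuting row layers, column layers, file layers and/or symbols. A conflict of $L$ with $A$ is a cell with $L(i,j,k)\in A(i,j,k)$; $L'$ avoids $A$ if it has no conflicts with $A$. A symbol-set of $L$ is the set of all cells in a given row layer, column layer or file layer of $L$ that contain a given symbol. A $3$-cube in $L$ is a set of eight cells $\{(i_a,j_b,k_c): a,b,c\in\{1,2\}\}$ with $i_1\ne i_2$, $j_1\neq j_2$, $k_1\ne k_2$, such that $L(i_1,j_1,k_1)=L(i_2,j_2,k_1)=L(i_1,j_2,k_2)=L(i_2,j_1,k_2)=x_1$ and $L(i_1,j_2,k_1)=L(i_2,j_1,k_1)=L(i_1,j_1,k_2)=L(i_2,j_2,k_2)=x_2$.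 A swap on this $3$-cube interchanges $x_1$ and $x_2$ in these eight cells (all other cells unchanged), producing another Latin cube. A $3$-cube is allowed if after swapping on it none of its eight cells is a conflict. A transversal-set of $L$ is a set of $n$ cells no two in the same row, column or file, no two containing the same symbol, and such that any two of its cells lie in a unique common $3$-cube. Following the paper's convention, floors/ceilings are omitted where not crucial. *)

(* Defs.v *)
From HB Require Import structures.
From mathcomp Require Import all_boot all_order all_algebra.
From mathcomp Require Import fingroup perm.
From mathcomp Require Export reals.
Set Implicit Arguments. Unset Strict Implicit. Unset Printing Implicit Defensive.

Definition cell (n : nat) := ('I_n * 'I_n * 'I_n)%type.
Definition ci {n} (c : cell n) : 'I_n := c.1.1.
Definition cj {n} (c : cell n) : 'I_n := c.1.2.
Definition ck {n} (c : cell n) : 'I_n := c.2.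

Definition latin_fun n := 'I_n -> 'I_n -> 'I_n -> 'I_n.
Definition set_cube n := 'I_n -> 'I_n -> 'I_n -> {set 'I_n}.

Definition Lat {n} (L : latin_fun n) (c : cell n) : 'I_n := L (ci c) (cj c) (ck c).
Definition Aat {n} (A : set_cube n) (c : cell n) : {set 'I_n} := A (ci c) (cj c) (ck c).

Definition row_set {n} (i k : 'I_n) : {set cell n} := [set c | (ci c == i) && (ck c == k)].
Definition col_set {n} (j k : 'I_n) : {set cell n} := [set c | (cj c == j) && (ck c == k)].
Definition file_set {n} (i j : 'I_n) : {set cell n} := [set c | (ci c == i) && (cj c == j)].
Definition row_layer {n} (i : 'I_n) : {set cell n} := [set c | ci c == i].
Definition col_layer {n} (j : 'I_n) : {set cell n} := [set c | cj c == j].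
Definition file_layer {n} (k : 'I_n) : {set cell n} := [set c | ck c == k].

Definition is_latin {n} (L : latin_fun n) : Prop :=
  (forall (x i k : 'I_n), #|[set c in row_set i k | Lat L c == x]| = 1) /\
  (forall (x j k : 'I_n), #|[set c in col_set j k | Lat L c == x]| = 1) /\
  (forall (x i j : 'I_n), #|[set c in file_set i j | Lat L c == x]| = 1).

Definition mmmm_cube {n} (m : nat) (A : set_cube n) : Prop :=
  (forall c : cell n, #|Aat A c| <= m) /\
  (forall (x i k : 'I_n), #|[set c in row_set i k | x \in Aat A c]| <= m) /\
  (forall (x j k : 'I_n), #|[set c in col_set j k | x \in Aat A c]| <= m) /\
  (forall (x i j : 'I_n), #|[set c in file_set i j | x \in Aat A c]| <= m).

(* a_x : binary digit vector of x (elements of Z_2^t ordered as integers). *)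
Definition bits t (x : 'I_(2 ^ t)) : {ffun 'I_t -> bool} :=
  [ffun b : 'I_t => odd (x %/ 2 ^ b)].

Definition boolean_cube t : latin_fun (2 ^ t) := fun i j k =>
  odflt i [pick x : 'I_(2 ^ t) |
             bits x == [ffun b => bits i b (+) bits j b (+) bits k b]].

Definition iso_boolean t (L : latin_fun (2 ^ t)) : Prop :=
  exists (p1 p2 p3 s : {perm 'I_(2 ^ t)}),
    forall i j k, L (p1 i) (p2 j) (p3 k) = s (@boolean_cube t i j k).

Definition conflicts {n} (L : latin_fun n) (A : set_cube n) : {set cell n} :=
  [set c | Lat L c \in Aat A c].

Definition avoids {n} (L : latin_fun n) (A : set_cube n) : Prop :=
  conflicts L A = set0.

Definition cube_cells {n} (i1 i2 j1 j2 k1 k2 : 'I_n) : {set cell n} :=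
  [set c | ((ci c == i1) || (ci c == i2)) && ((cj c == j1) || (cj c == j2))
           && ((ck c == k1) || (ck c == k2))].

Definition is_3cube {n} (L : latin_fun n) (Q : {set cell n}) : bool :=
  [exists i1 : 'I_n, exists i2 : 'I_n, exists j1 : 'I_n, exists j2 : 'I_n,
   exists k1 : 'I_n, exists k2 : 'I_n,
   [&& i1 != i2, j1 != j2, k1 != k2,
     Q == cube_cells i1 i2 j1 j2 k1 k2,
     L i2 j2 k1 == L i1 j1 k1, L i1 j2 k2 == L i1 j1 k1, L i2 j1 k2 == L i1 j1 k1,
     L i2 j1 k1 == L i1 j2 k1, L i1 j1 k2 == L i1 j2 k1 &
     L i2 j2 k2 == L i1 j2 k1]].

Definition swap_val {n} (L : latin_fun n) (Q : {set cell n}) (c : cell n) : 'I_n :=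
  if c \in Q then odflt (Lat L c) [pick y in [set Lat L d | d in Q] :\ Lat L c]
  else Lat L c.

Definition allowed {n} (L : latin_fun n) (A : set_cube n) (Q : {set cell n}) : bool :=
  is_3cube L Q && [forall c in Q, swap_val L Q c \notin Aat A c].

Definition is_transversal_set {n} (L : latin_fun n) (T : {set cell n}) : Prop :=
  #|T| = n /\
  (forall c d, c \in T -> d \in T -> c != d ->
     [/\ ~~ ((ci c == ci d) && (ck c == ck d)),
         ~~ ((cj c == cj d) && (ck c == ck d)),
         ~~ ((ci c == ci d) && (cj c == cj d)) &
         Lat L c != Lat L d]) /\
  (forall c d, c \in T -> d \in T -> c != d ->
     #|[set Q : {set cell n} | is_3cube L Q && (c \in Q) && (d \in Q)]| = 1).

Definition swap_all {n} (L : latin_fun n) (F : {set {set cell n}}) : latin_fun n :=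
  fun i j k =>
    let c : cell n := (i, j, k) in
    match [pick Q in F | c \in Q] with
    | Some Q => swap_val L Q c
    | None => Lat L c
    end.

(* Main.v *)
Require Import Defs.
From HB Require Import structures.
From mathcomp Require Import all_boot all_order all_algebra.
From mathcomp Require Import fingroup perm.
From mathcomp Require Import reals.
From mathcomp Require Import lra ring.
Import Order.TTheory GRing.Theory Num.Theory.
Set Implicit Arguments. Unset Strict Implicit. Unset Printing Implicit Defensive.

Ltac bcase := repeat match goal with |- context [fun_of_fin ?f ?i] => case: (fun_of_fin f i) end.
Ltac vtac := apply/ffunP => ?; rewrite ?ffunE; bcase.

Lemma nat_bits_inj t x y : x < 2 ^ t -> y < 2 ^ t ->
  (forall b, b < t -> odd (x %/ 2 ^ b) = odd (y %/ 2 ^ b)) -> x = y.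
Proof.
elim: t x y => [|t IH] x y.
  by rewrite expn0 !ltnS !leqn0 => /eqP -> /eqP ->.
move=> hx hy hb.
have h2 : forall z, z < 2 ^ t.+1 -> z %/ 2 < 2 ^ t.
  by move=> z hz; rewrite ltn_divLR // -expnSr.
have e : x %/ 2 = y %/ 2.
  apply: IH; [exact: h2|exact: h2|] => b hbt.
  by rewrite -!divnMA -expnS; apply: hb.
have o : odd x = odd y by have := hb 0 (ltn0Sn _); rewrite expn0 !divn1.
by rewrite -[x]odd_double_half -[y]odd_double_half -!divn2 e o.
Qed.

Section Bits.
Variable t : nat.
Local Notation V := {ffun 'I_t -> bool}.

Definition vadd (u w : V) : V := [ffun b => u b (+) w b].
Definition v0 : V := [ffun => false].

Lemma vaddA : associative vadd. Proof. by move=> *; vtac. Qed.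
Lemma vaddC : commutative vadd. Proof. by move=> *; vtac. Qed.
Lemma vadd0 u : vadd u v0 = u. Proof. by vtac. Qed.
Lemma vadd0l u : vadd v0 u = u. Proof. by vtac. Qed.
Lemma vaddvv u : vadd u u = v0. Proof. by vtac. Qed.
Lemma vaddK u w : vadd u (vadd u w) = w. Proof. by vtac. Qed.
Lemma vaddKr u w : vadd (vadd w u) u = w. Proof. by vtac. Qed.
Lemma vadd_inj u : injective (vadd u).
Proof. by move=> a b e; rewrite -(vaddK u a) e vaddK. Qed.
Lemma vadd_eq0 u w : (vadd u w == v0) = (u == w).
Proof.
apply/eqP/eqP => [e|->]; last exact: vaddvv.
by rewrite -(vaddK u w) e vadd0.
Qed.

Lemma bits_inj : injective (@bits t).
Proof.
move=> x y /ffunP e; apply: val_inj; apply: (@nat_bits_inj t); [exact: ltn_ord|exact: ltn_ord|] => b hb.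
by have := e (Ordinal hb); rewrite !ffunE.
Qed.

Lemma bits_bij : bijective (@bits t).
Proof. by apply: inj_card_bij; [exact: bits_inj| rewrite card_ffun !card_ord card_bool]. Qed.

Lemma card_V_le : #|{ffun 'I_t -> bool}| <= #|'I_(2 ^ t)|.
Proof. by rewrite card_ffun !card_ord card_bool. Qed.

Definition ib (u : V) : 'I_(2 ^ t) := iinv (inj_card_onto bits_inj card_V_le u).

Lemma bits_ib u : bits (ib u) = u.
Proof. by rewrite /ib f_iinv. Qed.
Lemma ib_bits x : ib (bits x) = x.
Proof. by apply: bits_inj; rewrite bits_ib. Qed.
Lemma ib_inj : injective ib.
Proof. by move=> a b e; rewrite -(bits_ib a) e bits_ib. Qed.

Lemma bc_bits i j k : bits (@boolean_cube t i j k) = vadd (vadd (bits i) (bits j)) (bits k).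
Proof.
rewrite /boolean_cube; case: pickP => [x /eqP -> | H] /=.
  by rewrite /vadd; apply/ffunP => b; rewrite !ffunE.
have := H (ib (vadd (vadd (bits i) (bits j)) (bits k))).
rewrite bits_ib; suff -> : vadd (vadd (bits i) (bits j)) (bits k) = [ffun b => bits i b (+) bits j b (+) bits k b] by rewrite eqxx.
by apply/ffunP => b; rewrite !ffunE.
Qed.
End Bits.

Definition B3 := (bool * bool * bool)%type.
Definition b0 : B3 := (false, false, false).
Definition dot (l r : B3) := (l.1.1 && r.1.1) (+) (l.1.2 && r.1.2) (+) (l.2 && r.2).
Definition bxor (a b : B3) : B3 := (a.1.1 (+) b.1.1, a.1.2 (+) b.1.2, a.2 (+) b.2).
Definition code (r : B3) := 4 * r.1.1 + 2 * r.1.2 + r.2.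
Definition par (r : B3) := r.1.1 (+) r.1.2 (+) r.2.

Lemma sumB3 (f : B3 -> nat) : \sum_(p : B3) f p = f (true,true,true) + f (true,true,false) + f (true,false,true) + f (true,false,false)
  + f (false,true,true) + f (false,true,false) + f (false,false,true) + f (false,false,false).
Proof.
rewrite (eq_bigr (fun p => f (p.1, p.2))); last by case.
rewrite -(pair_bigA _ (fun p c => f (p, c))) /=.
rewrite (eq_bigr (fun p => \sum_(c : bool) f (p.1, p.2, c))); last by case.
rewrite -(pair_bigA _ (fun a b => \sum_(c : bool) f (a, b, c))) /=.
by rewrite !big_bool /= !addnA.
Qed.

Lemma cardB3 (P : pred B3) : #|P| = P (true,true,true) + P (true,true,false) + P (true,false,true) + P (true,false,false)
  + P (false,true,true) + P (false,true,false) + P (false,false,true) + P (false,false,false).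
Proof.
rewrite -sum1_card big_mkcond /= sumB3 !unfold_in.
by case: (P (true,true,true)); case: (P (true,true,false)); case: (P (true,false,true)); case: (P (true,false,false));
   case: (P (false,true,true)); case: (P (false,true,false)); case: (P (false,false,true)); case: (P (false,false,false)).
Qed.

Lemma bxorK a b : bxor (bxor a b) b = a.
Proof. by case: a b => [[[] []] []] [[[] []] []]. Qed.
Lemma bxorC a b : bxor a b = bxor b a.
Proof. by case: a b => [[[] []] []] [[[] []] []]. Qed.

Section Geo.
Variable t : nat.
Local Notation V := {ffun 'I_t -> bool}.
Local Notation X := (V * V * V)%type.
Local Notation v0 := (@v0 t).

Definition x0 : X := (v0, v0, v0).
Definition xadd (x y : X) : X := (vadd x.1.1 y.1.1, vadd x.1.2 y.1.2, vadd x.2 y.2).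
Definition sc (r : B3) (v : V) : X :=
  (if r.1.1 then v else v0, if r.1.2 then v else v0, if r.2 then v else v0).
Definition bsum (x : X) : V := vadd (vadd x.1.1 x.1.2) x.2.
Definition lam (l : B3) (y : X) : V :=
  vadd (vadd (if l.1.1 then y.1.1 else v0) (if l.1.2 then y.1.2 else v0)) (if l.2 then y.2 else v0).
Definition line (x : X) (tau : B3) : {set X} := [set xadd x (sc tau w) | w : V].
Definition cube (c : X) (v : V) : {set X} := [set xadd c (sc r v) | r : B3].
Definition pl (l : B3) (u : V) : {set X} := [set y | lam l y == u].

Ltac xt := repeat match goal with x : X |- _ => case: x => [[? ?] ?] end;
  rewrite /xadd /sc /bsum /lam /x0 /=; try (congr (_, _, _)); vtac.

Lemma xaddA : associative xadd. Proof. by move=> x y z; xt. Qed.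
Lemma xaddC : commutative xadd. Proof. by move=> x y; xt. Qed.
Lemma xaddK x y : xadd x (xadd x y) = y. Proof. by xt. Qed.
Lemma xaddKr x y : xadd (xadd y x) x = y. Proof. by xt. Qed.
Lemma xadd0 x : xadd x x0 = x. Proof. by xt. Qed.
Lemma xaddvv x : xadd x x = x0. Proof. by xt. Qed.
Lemma xadd_inj x : injective (xadd x).
Proof. by move=> a b e; rewrite -(xaddK x a) e xaddK. Qed.

Lemma sc_b0 v : sc b0 v = x0. Proof. by []. Qed.
Lemma sc_v0 r : sc r v0 = x0. Proof. by case: r => [[[] []] []]. Qed.
Lemma sc_xor r r' v : sc (bxor r r') v = xadd (sc r v) (sc r' v).
Proof. by case: r r' => [[[] []] []] [[[] []] []]; xt. Qed.
Lemma sc_addv r v w : sc r (vadd v w) = xadd (sc r v) (sc r w).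
Proof. by case: r => [[[] []] []]; xt. Qed.
Lemma bsum_add x y : bsum (xadd x y) = vadd (bsum x) (bsum y). Proof. by xt. Qed.
Lemma bsum_sc r v : bsum (sc r v) = if par r then v else v0.
Proof. by case: r => [[[] []] []]; xt. Qed.
Lemma lam_add l x y : lam l (xadd x y) = vadd (lam l x) (lam l y).
Proof. by case: l => [[[] []] []]; xt. Qed.
Lemma lam_sc l r v : lam l (sc r v) = if dot l r then v else v0.
Proof. by case: l r => [[[] []] []] [[[] []] []]; xt. Qed.

Lemma sc_eqP a tau v w : v != v0 -> tau != b0 -> sc a v = sc tau w ->
  ((a == b0) && (w == v0)) || ((a == tau) && (w == v)).
Proof.
case: a => [[[] []] []]; case: tau => [[[] []] []] //= hv _ [] *; subst;
  rewrite ?eqxx //=; move: hv; rewrite ?eqxx //.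
Qed.

Lemma xaddKm c a b : xadd (xadd c a) (xadd a b) = xadd c b. Proof. by xt. Qed.
Lemma xaddKl c a b : xadd (xadd c a) (xadd c b) = xadd a b. Proof. by xt. Qed.

Lemma bxor_b0 a b : bxor a b = b0 -> a = b.
Proof. by case: a b => [[[] []] []] [[[] []] []]. Qed.

Lemma cube_self c v : c \in cube c v.
Proof. by apply/imsetP; exists b0 => //; rewrite sc_b0 xadd0. Qed.
Lemma line_self x tau : x \in line x tau.
Proof. by apply/imsetP; exists v0 => //; rewrite sc_v0 xadd0. Qed.

Lemma cube_shift c v y : y \in cube c v -> cube y v = cube c v.
Proof.
case/imsetP => r _ ->; apply/setP => z; apply/imsetP/imsetP => [[r' _ ->]|[r' _ ->]].
  by exists (bxor r r') => //; rewrite sc_xor xaddA.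
by exists (bxor r r') => //; rewrite sc_xor xaddKm.
Qed.

Lemma line_shift x tau y : y \in line x tau -> line y tau = line x tau.
Proof.
case/imsetP => w _ ->; apply/setP => z; apply/imsetP/imsetP => [[w' _ ->]|[w' _ ->]].
  by exists (vadd w w') => //; rewrite sc_addv xaddA.
by exists (vadd w w') => //; rewrite sc_addv xaddKm.
Qed.

Lemma cube_line c v x tau : v != v0 -> tau != b0 -> #|cube c v :&: line x tau| <= 2.
Proof.
move=> hv ht.
set P := [set r | xadd c (sc r v) \in line x tau].
have hsub: cube c v :&: line x tau \subset (fun r => xadd c (sc r v)) @: P.
  apply/subsetP => y /setIP [/imsetP [r _ ->] hl]; apply/imsetP; exists r => //; by rewrite inE.
apply: leq_trans (subset_leq_card hsub) _; apply: leq_trans (leq_imset_card _ _) _.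
case: (set_0Vmem P) => [->|[r0 hr0]]; first by rewrite cards0.
have : P \subset [set r0; bxor r0 tau].
  apply/subsetP => r; rewrite !inE => hr; move: hr0; rewrite inE => hr0.
  case/imsetP: hr => w _ e; case/imsetP: hr0 => w0 _ e0.
  have : sc (bxor r r0) v = sc tau (vadd w w0).
    by rewrite sc_xor sc_addv -(xaddKl c) e e0 xaddKl.
  move/(sc_eqP hv ht) => /orP [/andP [/eqP h _]|/andP [/eqP h _]].
    by rewrite (bxor_b0 h) eqxx.
  by rewrite -(bxorK r r0) h bxorC eqxx orbT.
move/subset_leq_card => h; apply: leq_trans h _; rewrite cards2; by case: (_ != _).
Qed.

Lemma dot_card l b : l != b0 -> #|[set r | dot l r == b]| <= 4.
Proof. by case: l => [[[] []] []] //; case: b; rewrite cardsE cardB3. Qed.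

Lemma cube_pl c v l u : v != v0 -> l != b0 -> #|cube c v :&: pl l u| <= 4.
Proof.
move=> hv hl.
set P := [set r | xadd c (sc r v) \in pl l u].
have hsub: cube c v :&: pl l u \subset (fun r => xadd c (sc r v)) @: P.
  apply/subsetP => y /setIP [/imsetP [r _ ->] hp]; apply/imsetP; exists r => //; by rewrite inE.
apply: leq_trans (subset_leq_card hsub) _; apply: leq_trans (leq_imset_card _ _) _.
case: (set_0Vmem P) => [->|[r0 hr0]]; first by rewrite cards0.
have : P \subset [set r | dot l r == dot l r0].
  apply/subsetP => r; rewrite !inE => hr; move: hr0; rewrite !inE => hr0.
  move: hr hr0; rewrite !lam_add !lam_sc => /eqP <- /eqP.
  case: (dot l r); case: (dot l r0) => // /vadd_inj e; by [rewrite e eqxx in hv | rewrite -e eqxx in hv].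
move/subset_leq_card => h; apply: leq_trans h _; exact: dot_card.
Qed.

Lemma card_cube c v : #|cube c v| <= 8.
Proof. by apply: leq_trans (leq_imset_card _ _) _; rewrite cardB3. Qed.
End Geo.

Definition R3 (tau : B3) := [set s : B3 | (s != b0) && (s != tau) && (code s < code (bxor s tau))].
Definition cross (a b : B3) : B3 :=
  ((a.1.2 && b.2) (+) (a.2 && b.1.2), (a.2 && b.1.1) (+) (a.1.1 && b.2), (a.1.1 && b.1.2) (+) (a.1.2 && b.1.1)).
Definition fstc t (tau : B3) (z : ({ffun 'I_t -> bool} * {ffun 'I_t -> bool} * {ffun 'I_t -> bool})%type) :=
  if tau.1.1 then z.1.1 else if tau.1.2 then z.1.2 else z.2.
Definition pt (l : B3) : B3 :=
  match l with
  | (true, false, false) => (false, true, false)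
  | (false, true, false) => (false, false, true)
  | (false, false, true) => (false, true, false)
  | (true, true, false) => (true, true, false)
  | (true, false, true) => (true, false, true)
  | (false, true, true) => (false, true, true)
  | _ => (true, true, false)
  end.
Definition pf t (l : B3) (z : ({ffun 'I_t -> bool} * {ffun 'I_t -> bool} * {ffun 'I_t -> bool})%type) :=
  match l with
  | (true, false, false) => z.2
  | (false, true, false) => z.1.1
  | (false, false, true) => z.1.1
  | (true, true, false) => z.2
  | (true, false, true) => z.1.2
  | (false, true, true) => z.1.1
  | _ => z.2
  end.

Lemma pt_neq0 l : pt l != b0. Proof. by case: l => [[[] []] []]. Qed.
Lemma cross_dotl a b : dot (cross a b) a = false. Proof. by case: a b => [[[] []] []] [[[] []] []]. Qed.
Lemma cross_dotr a b : dot (cross a b) b = false. Proof. by case: a b => [[[] []] []] [[[] []] []]. Qed.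
Lemma R3_cross s tau : tau != b0 -> s \in R3 tau -> cross s tau != b0.
Proof. by rewrite inE; case: s tau => [[[] []] []] [[[] []] []]. Qed.
Lemma R3_ne s tau : s \in R3 tau -> (s != b0) && (s != tau).
Proof. by rewrite inE => /andP []. Qed.
Lemma code_ne r tau : tau != b0 -> code r != code (bxor r tau).
Proof. by case: r tau => [[[] []] []] [[[] []] []]. Qed.
Lemma bxor_eq_b0 r tau : (bxor r tau == b0) = (r == tau).
Proof. by case: r tau => [[[] []] []] [[[] []] []]. Qed.
Lemma bxor_eq r tau : (bxor r tau == tau) = (r == b0).
Proof. by case: r tau => [[[] []] []] [[[] []] []]. Qed.
Lemma bxorKl r tau : bxor (bxor r tau) tau = r.
Proof. exact: bxorK. Qed.

Section Geo2.
Variable t : nat.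
Local Notation V := {ffun 'I_t -> bool}.
Local Notation X := (V * V * V)%type.
Local Notation v0 := (@v0 t).
Local Notation xadd := (@xadd t).
Local Notation sc := (@sc t).
Local Notation cube := (@cube t).
Local Notation line := (@line t).
Local Notation lam := (@lam t).
Local Notation pl := (@pl t).

Ltac xt := repeat match goal with x : X |- _ => case: x => [[? ?] ?] end;
  rewrite /xadd /sc /bsum /lam /x0 /=; try (congr (_, _, _)); vtac.

Lemma xadd_swap a b c d : xadd a b = xadd c d -> xadd a c = xadd b d.
Proof. move=> e; rewrite -(xaddKr d c) -e; clear e; by xt. Qed.

Definition gfun (c y : X) : V := let z := xadd y c in
  if z.1.1 != v0 then z.1.1 else if z.1.2 != v0 then z.1.2 else z.2.

Lemma gfun_sc c r v : r != b0 -> gfun c (xadd c (sc r v)) = v.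
Proof.
rewrite /gfun xaddC xaddK; case: (v =P v0) => [->|hv]; first by rewrite sc_v0 /= !eqxx.
have hv' : (v != v0) by apply/eqP.
by case: r => [[[] []] []] //= _; rewrite ?hv' ?eqxx.
Qed.

Lemma lam_cube l c v y : y \in cube c v -> lam l y != lam l c -> vadd (lam l c) v = lam l y.
Proof.
case/imsetP => r _ ->; rewrite lam_add lam_sc; case: (dot l r) => //.
by rewrite vadd0 eqxx.
Qed.

Lemma line_R3 c v x tau y : v != v0 -> tau != b0 -> y \in cube c v -> y \in line x tau ->
  c \notin line x tau -> exists2 s, s \in R3 tau & line x tau = line (xadd c (sc s v)) tau.
Proof.
move=> hv ht hy hl hc.
have el := line_shift hl.
case/imsetP: hy => r _ ey.
have rb0 : r != b0.
  apply: contra hc => /eqP er; move: hl; by rewrite ey er sc_b0 xadd0.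
have rt : r != tau.
  apply: contra hc => /eqP er; rewrite -el; apply/imsetP; exists v => //.
  by rewrite ey er xaddKr.
have [lt|ge] := ltnP (code r) (code (bxor r tau)).
  exists r; first by rewrite inE rb0 rt lt.
  by rewrite -el ey.
exists (bxor r tau).
  rewrite inE bxor_eq_b0 rt bxor_eq rb0 bxorK /=.
  by rewrite ltn_neqAle ge eq_sym code_ne.
rewrite -el; symmetry; apply: line_shift; apply/imsetP; exists v => //.
by rewrite ey sc_xor xaddA.
Qed.

Lemma R3_lines_disj c s tau v v' y : tau != b0 -> s \in R3 tau ->
  y \in line (xadd c (sc s v)) tau -> y \in line (xadd c (sc s v')) tau -> v = v'.
Proof.
move=> ht /R3_ne /andP [s0 st] /imsetP [w _ ->] /imsetP [w' _].
rewrite -!xaddA => /xadd_inj e.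
case: (v =P v') => // /eqP ne.
have : sc s (vadd v v') = sc tau (vadd w w').
  by rewrite !sc_addv; apply: xadd_swap.
move/(sc_eqP _ ht); rewrite vadd_eq0 => /(_ ne) /orP [] /andP [/eqP e1 _].
  by rewrite e1 eqxx in s0.
by rewrite e1 eqxx in st.
Qed.

Lemma R3_line_pl c s tau v : s \in R3 tau ->
  line (xadd c (sc s v)) tau \subset pl (cross s tau) (lam (cross s tau) c).
Proof.
move=> _; apply/subsetP => y /imsetP [w _ ->]; rewrite inE !lam_add !lam_sc.
by rewrite cross_dotl cross_dotr !vadd0.
Qed.

Lemma plane_fiber l y y' : l != b0 -> lam l y = lam l y' -> pf l y = pf l y' -> y' \in line y (pt l).
Proof.
move=> hl h e; apply/imsetP; exists (fstc (pt l) (xadd y y')) => //.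
move: hl h e; case: y y' => [[a1 a2] a3] [[b1 b2] b3].
case: l => [[[] []] []] //= _; rewrite /lam /= => /ffunP h e; subst; by
  rewrite /xadd /sc /fstc /=; congr (_, _, _); apply/ffunP => i; move: (h i); rewrite !ffunE; bcase.
Qed.
End Geo2.

Section Arith.
Local Open Scope ring_scope.

Lemma lin {R : realType} {aN g b2 b3 b4 eN K P Q W Rr : R} : aN <= g -> g <= b2 + b3 + b4 ->
  b2 <= 7 * (eN + 2 + 2 * K) -> b3 <= 56 * P -> b4 <= 21 * Q + W + 84 * Rr -> W <= 28 ->
  0 < aN - 21 * K - 7 * eN - 84 * Rr - 21 * Q - 80 * P - 28 -> 1 <= P -> 1 <= K -> False.
Proof. move=> *; lra. Qed.

Lemma arith {R : realType} {a k th e N g b2 b3 b4 : R} :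
  0 < th -> 0 < e -> 0 < N -> 3 <= e * N ->
  0 < a * N - 21 * k * N - 7 * e * N - 84 * k / e * N - 21 * th / e * N - 80 * k / th * N - 28 ->
  1 <= k * N -> a * N <= g -> g <= N -> g <= b2 + b3 + b4 ->
  b2 <= 7 * (e * N + 2 + 2 * (k * N)) ->
  b3 * (th * N ^+ 2) <= 7 * (8 * (N * (N * (k * N)))) ->
  b4 * (e * N) <= 21 * (th * N ^+ 2 + 4 + 4 * (N * (k * N))) -> False.
Proof.
move=> hth he hN heN hm hK haN hg hgb hb2 hb3 hb4.
have th0 : th != 0 by rewrite gt_eqF.
have e0 : e != 0 by rewrite gt_eqF.
have N0 : N != 0 by rewrite gt_eqF.
have eNp : 0 < e * N by rewrite mulr_gt0.
have thN2 : 0 < th * N ^+ 2 by rewrite mulr_gt0 // exprn_gt0.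
set K := k * N in hK hb2 hb3 hb4.
have hb3' : b3 <= 56 * (K / th).
  rewrite -ler_pdivlMr // in hb3; apply: le_trans hb3 _.
  rewrite le_eqVlt; apply/orP; left; apply/eqP; rewrite /K; field; by rewrite th0 N0.
have hb4' : b4 <= 21 * (th * N / e) + 84 / (e * N) + 84 * (K / e).
  rewrite -ler_pdivlMr // in hb4; apply: le_trans hb4 _.
  rewrite le_eqVlt; apply/orP; left; apply/eqP; rewrite /K; field; by rewrite e0 N0.
have hW : 84 / (e * N) <= 28.
  rewrite ler_pdivrMr //; lra.
have e1 : 84 * k / e * N = 84 * (K / e) by rewrite /K; field.
have e2 : 21 * th / e * N = 21 * (th * N / e) by field.
have e3 : 80 * k / th * N = 80 * (K / th) by rewrite /K; field.
have e4 : 21 * k * N = 21 * K by rewrite /K; ring.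
have e5 : 7 * e * N = 7 * (e * N) by ring.
rewrite e1 e2 e3 e4 e5 in hm.
have hK0 : 0 <= K by lra.
have hKe : 0 <= K / e by apply: divr_ge0 => //; exact: ltW.
have hQ : 0 <= th * N / e by apply: divr_ge0; [apply: mulr_ge0; exact: ltW | exact: ltW].
have hP0 : 0 <= K / th by apply: divr_ge0 => //; exact: ltW.
have hQN : th * N / e < N / 21 by lra.
have heN7 : e * N < N / 7 by lra.
have hq : th / e < 1 / 21.
  have : th / e * N < 1 / 21 * N.
    have ee1 : th / e * N = th * N / e by field.
    have ee2 : 1 / 21 * N = N / 21 by field.
    by rewrite ee1 ee2.
  by rewrite ltr_pM2r.
have he7 : e < 1 / 7.
  have ee : 1 / 7 * N = N / 7 by field.
  have : e * N < (1 / 7) * N by rewrite ee.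
  by rewrite ltr_pM2r.
have hthe : th < e / 21.
  have : th / e * e < 1 / 21 * e by rewrite ltr_pM2r.
  have ee1 : th / e * e = th by field.
  have ee2 : 1 / 21 * e = e / 21 by field.
  by rewrite ee1 ee2.
have hP : 1 <= K / th.
  rewrite ler_pdivlMr //; lra.
exact: (lin haN hgb hb2 hb3' hb4' hW hm hP hK).
Qed.

End Arith.

Lemma card_fiber (T U : finType) (A : {set T}) (f : T -> U) :
  #|A| = (\sum_(u : U) #|A :&: [set y | f y == u]|)%N.
Proof.
rewrite -sum1_card (partition_big f xpredT) //=; apply: eq_bigr => u _.
by rewrite -sum1_card; apply: eq_bigl => y; rewrite !inE.
Qed.

Lemma card_bigcup_le (T I : finType) (P : pred I) (F : I -> {set T}) :
  (#|\bigcup_(i | P i) F i| <= \sum_(i | P i) #|F i|)%N.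
Proof.
elim/big_ind2: _ => //; first by rewrite cards0.
move=> n1 A n2 B ha hb; apply: leq_trans (leq_card_setU A B).1 _; exact: leq_add.
Qed.

Lemma sum_sub_le (I : finType) (F : {set I}) (g : I -> nat) :
  (\sum_(i in F) g i <= \sum_i g i)%N.
Proof.
rewrite [X in (_ <= X)%N](bigID (mem F)) /=; exact: leq_addr.
Qed.

Definition NZ := [set tau : B3 | tau != b0].
Lemma card_NZ : #|NZ| = 7%N. Proof. by rewrite cardsE cardB3. Qed.
Lemma sum_R3 : (\sum_(tau in NZ) #|R3 tau|)%N = 21%N.
Proof. by rewrite big_mkcond sumB3 !inE /= /R3 !cardsE !cardB3. Qed.

Section Core.
Variable t : nat.
Variable R : realType.
Local Open Scope ring_scope.
Local Notation V := {ffun 'I_t -> bool}.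
Local Notation X := (V * V * V)%type.
Local Notation v0 := (@v0 t).
Local Notation xadd := (@xadd t).
Local Notation sc := (@sc t).
Local Notation cube := (@cube t).
Local Notation line := (@line t).
Local Notation lam := (@lam t).
Local Notation pl := (@pl t).
Local Notation nR := ((2 ^ t)%:R).

Lemma card_V : #|V| = (2 ^ t)%N.
Proof. by rewrite card_ffun card_bool card_ord. Qed.

Lemma sum_fiber_le (A : {set X}) (f : X -> V) (B : V -> {set X}) (F : {set V}) (M : R) :
  (forall v, B v \subset A :&: [set y | f y == v]) -> (forall v, v \in F -> M <= #|B v|%:R) ->
  #|F|%:R * M <= #|A|%:R.
Proof.
move=> hB hM.
have h1 : (\sum_(v in F) #|B v| <= #|A|)%N.
  apply: leq_trans (sum_sub_le F (fun v => #|B v|)) _.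
  rewrite (card_fiber A f); apply: leq_sum => v _; exact: subset_leq_card.
apply: le_trans (_ : (\sum_(v in F) #|B v|)%:R <= _); last by rewrite ler_nat.
rewrite natr_sum mulr_natl -sumr_const; apply: ler_sum => v hv; exact: hM.
Qed.

Variables (conf : {set X}) (good : X -> V -> bool) (alpha kappa theta eps : R).
Hypothesis Hline : forall x tau, tau != b0 -> #|conf :&: line x tau|%:R <= kappa * nR.

Lemma pl_conf l u : l != b0 -> #|conf :&: pl l u|%:R <= nR * (kappa * nR).
Proof.
move=> hl; rewrite (card_fiber _ (pf l)) natr_sum.
have -> : nR * (kappa * nR) = \sum_(u : V) (kappa * nR) by rewrite sumr_const card_V mulr_natl.
apply: ler_sum => a _.
case: (set_0Vmem (conf :&: pl l u :&: [set y | pf l y == a])) => [->|[y0 hy0]].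
  rewrite cards0; apply: le_trans (Hline (x0 t) (pt_neq0 (true,true,true))); exact: ler0n.
apply: le_trans (Hline y0 (pt_neq0 l)); rewrite ler_nat; apply: subset_leq_card.
apply/subsetP => y; move: hy0; rewrite !inE => /andP [/andP [hc0 /eqP h0] /eqP e0] /andP [/andP [hc /eqP h] /eqP e].
by rewrite hc; apply: plane_fiber => //; rewrite ?h ?h0 ?e ?e0.
Qed.

Lemma conf_tot : #|conf|%:R <= nR * (nR * (kappa * nR)).
Proof.
rewrite (card_fiber _ (lam (true,false,false))) natr_sum.
have -> : nR * (nR * (kappa * nR)) = \sum_(u : V) (nR * (kappa * nR)) by rewrite sumr_const card_V mulr_natl.
by apply: ler_sum => u _; apply: (pl_conf u).
Qed.

Definition S (C : {set X}) (d : X -> V) := \bigcup_(c in C) cube c (d c).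

Definition valid (C : {set X}) (d : X -> V) : Prop := [/\ C \subset conf,
  (forall c, c \in C -> (d c != v0) && good c (d c)),
  (forall c c', c \in C -> c' \in C -> c != c' -> [disjoint cube c (d c) & cube c' (d c')]),
  (forall x tau, tau != b0 -> #|S C d :&: line x tau|%:R < eps * nR + 2 + 2 * #|C :&: line x tau|%:R) &
  (forall l u, l != b0 -> #|S C d :&: pl l u|%:R < theta * nR ^+ 2 + 4 + 4 * #|C :&: pl l u|%:R)].

Hypothesis Hth : 0 < theta.
Hypothesis Heps : 0 < eps.
Hypothesis Hen : 3 <= eps * nR.

Lemma nR_gt0 : (0 : R) < nR. Proof. by rewrite ltr0n expn_gt0. Qed.

Lemma valid0 : valid set0 (fun _ => v0).
Proof.
have S0 : S set0 (fun _ => v0) = set0 by rewrite /S big_set0.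
split; rewrite ?S0.
- exact: sub0set.
- by move=> c; rewrite inE.
- by move=> c c'; rewrite inE.
- move=> x tau _; rewrite set0I !cards0 /=; have h3 := Hen; lra.
- move=> l u _; rewrite set0I !cards0 /=; have h3 := Hth.
  have : 0 <= theta * nR ^+ 2 by apply: mulr_ge0; [exact: ltW | exact: sqr_ge0].
  lra.
Qed.

Lemma mem_S (C : {set X}) (d : X -> V) c : c \in C -> cube c (d c) \subset S C d.
Proof. by move=> hc; apply: (bigcup_sup c). Qed.

Lemma cardU1I (C Y : {set X}) c : c \notin C -> #|(c |: C) :&: Y| = ((c \in Y) + #|C :&: Y|)%N.
Proof.
move=> cC; rewrite setIUl; case: (boolP (c \in Y)) => h.
  rewrite (setIidPl _) ?sub1set // cardsU1 inE (negbTE cC) //.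
rewrite (_ : [set c] :&: Y = set0) ?set0U //; apply/setP => y; rewrite !inE.
by apply/andP => -[/eqP -> ]; rewrite (negbTE h).
Qed.

Lemma cardUI_le (A B Y : {set X}) : (#|(A :|: B) :&: Y| <= #|A :&: Y| + #|B :&: Y|)%N.
Proof. by rewrite setIUl; exact: (leq_card_setU _ _).1. Qed.

Lemma valid_ext C d c v : valid C d -> c \in conf -> c \notin S C d -> v != v0 -> good c v ->
  [disjoint cube c v & S C d] ->
  (forall l u, l != b0 -> lam l c != u -> cube c v :&: pl l u != set0 ->
     #|S C d :&: pl l u|%:R < theta * nR ^+ 2) ->
  (forall x tau, tau != b0 -> c \notin line x tau -> cube c v :&: line x tau != set0 ->
     #|S C d :&: line x tau|%:R < eps * nR) ->
  valid (c |: C) (fun y => if y == c then v else d y).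
Proof.
move=> [h1 h2 h3 h4 h5] hc cS hv hg hdis E3 E4.
set d' := fun y => if y == c then v else d y.
have cC : c \notin C.
  by apply: contra cS => hcC; apply: (subsetP (mem_S d hcC)); exact: cube_self.
have dd : forall c', c' \in C -> d' c' = d c'.
  move=> c' hc'; rewrite /d' ifF //; apply/negbTE; apply: contraNneq cC => <-; exact: hc'.
have eS : S (c |: C) d' = cube c v :|: S C d.
  rewrite /S big_setU1 //=; rewrite {1}/d' eqxx; congr (_ :|: _); apply: eq_bigr => c' hc'; by rewrite dd.
split; rewrite ?eS.
- apply/subsetP => y; rewrite in_setU1 => /orP [/eqP->|hy] //; exact: (subsetP h1).
- move=> y; rewrite in_setU1 => /orP [/eqP->|hy]; first by rewrite /d' eqxx hv hg.
  by rewrite dd //; apply: h2.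
- have key : forall c', c' \in C -> [disjoint cube c (d' c) & cube c' (d' c')].
    move=> c' hc'; rewrite (dd c' hc') {1}/d' eqxx; apply: disjointWr hdis; exact: mem_S.
  move=> c1 c2; rewrite !in_setU1 => /orP [/eqP->|hc1] /orP [/eqP->|hc2]; rewrite ?eqxx //.
  + by move=> _; apply: key.
  + by move=> _; rewrite disjoint_sym; apply: key.
  + by move=> ne; rewrite !dd //; apply: h3.
- move=> x tau ht; rewrite cardU1I //.
  have hle := cardUI_le (cube c v) (S C d) (line x tau).
  have ha := cube_line c x hv ht.
  have hs := h4 x tau ht.
  move: hle ha; rewrite -!(ler_nat R) natrD => hle ha.
  case: (boolP (c \in line x tau)) => hcl.
    rewrite natrD /=; lra.
  have hm : 0 <= (#|C :&: line x tau|)%:R :> R by exact: ler0n.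
  rewrite add0n; case: (eqVneq (cube c v :&: line x tau) set0) => he.
    move: hle; rewrite he cards0 /=; lra.
  have := E4 x tau ht hcl he; lra.
- move=> l u hl; rewrite cardU1I //.
  have hle := cardUI_le (cube c v) (S C d) (pl l u).
  have ha := cube_pl c u hv hl.
  have hs := h5 l u hl.
  move: hle ha; rewrite -!(ler_nat R) natrD => hle ha.
  case: (boolP (c \in pl l u)) => hcl.
    rewrite natrD /=; lra.
  have hm : 0 <= (#|C :&: pl l u|)%:R :> R by exact: ler0n.
  rewrite add0n; case: (eqVneq (cube c v :&: pl l u) set0) => he.
    move: hle; rewrite he cards0 /=; lra.
  have : lam l c != u by move: hcl; rewrite inE.
  move=> hlu; have := E3 l u hl hlu he; lra.
Qed.

Hypothesis Hgood : forall c, c \in conf -> alpha * nR <= #|[set v | (v != v0) && good c v]|%:R.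
Hypothesis Hmain : 0 < alpha * nR - 21 * kappa * nR - 7 * eps * nR - 84 * kappa / eps * nR
  - 21 * theta / eps * nR - 80 * kappa / theta * nR - 28.

Lemma exists_ok C d c : valid C d -> c \in conf -> c \notin S C d ->
  exists v, [/\ v != v0, good c v, [disjoint cube c v & S C d],
   (forall l u, l != b0 -> lam l c != u -> cube c v :&: pl l u != set0 ->
     #|S C d :&: pl l u|%:R < theta * nR ^+ 2) &
   (forall x tau, tau != b0 -> c \notin line x tau -> cube c v :&: line x tau != set0 ->
     #|S C d :&: line x tau|%:R < eps * nR)].
Proof.
move=> hV hc cS; have [h1 h2 h3 h4 h5] := hV.
set SS := S C d.
set G := [set v | (v != v0) && good c v].
set B2 := [set v | ~~ [disjoint cube c v & SS]].
pose F3 l := [set v | theta * nR ^+ 2 <= #|SS :&: pl l (vadd (lam l c) v)|%:R].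
pose F4 tau s := [set v | eps * nR <= #|SS :&: line (xadd c (sc s v)) tau|%:R].
set B3 := \bigcup_(l in NZ) F3 l.
set B4 := \bigcup_(tau in NZ) \bigcup_(s in R3 tau) F4 tau s.
case: (boolP (G \subset B2 :|: B3 :|: B4)) => [hsub|/subsetPn [v hvG hvB]]; last first.
  move: hvG; rewrite inE => /andP [hv hg].
  move: hvB; rewrite !in_setU !negb_or => /andP [/andP [hB2 hB3] hB4].
  exists v; split => //.
  - by move: hB2; rewrite inE negbK.
  - move=> l u hl hlu /set0Pn [y /setIP [hy hyp]].
    have hyu : lam l y = u by move: hyp; rewrite inE => /eqP.
    have hne : lam l y != lam l c by rewrite hyu eq_sym.
    have e' := lam_cube hy hne.
    have : v \notin F3 l.
      apply: contra hB3 => hF; apply/bigcupP; exists l => //; by rewrite inE.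
    by rewrite inE -ltNge e' hyu.
  - move=> x tau ht hcl /set0Pn [y /setIP [hy hyl]].
    have [s hs el] := line_R3 hv ht hy hyl hcl.
    have : v \notin F4 tau s.
      apply: contra hB4 => hF; apply/bigcupP; exists tau; first by rewrite inE.
      by apply/bigcupP; exists s.
    by rewrite inE -ltNge el.
have hG := Hgood hc.
have hGn : (#|G| <= 2 ^ t)%N by rewrite -card_V; exact: max_card.
have hGb : (#|G| <= #|B2| + #|B3| + #|B4|)%N.
  apply: leq_trans (subset_leq_card hsub) _; apply: leq_trans (leq_card_setU _ _).1 _.
  rewrite leq_add2r; exact: (leq_card_setU _ _).1.
have hK1 : 1 <= kappa * nR.
  have hl := Hline c (pt_neq0 (true,true,true)).
  apply: le_trans hl; rewrite (ler_nat R 1); apply/card_gt0P; exists c.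
  by rewrite inE hc line_self.
have hB2 : #|B2|%:R <= 7 * (eps * nR + 2 + 2 * (kappa * nR)).
  have sub2 : B2 \subset gfun c @: (SS :&: \bigcup_(tau in NZ) line c tau).
    apply/subsetP => v; rewrite inE -setI_eq0 => /set0Pn [y /setIP [hy hyS]].
    case/imsetP: (hy) => r _ ey.
    have rb0 : r != b0 by apply: contra cS => /eqP er; move: hyS; rewrite ey er sc_b0 xadd0.
    apply/imsetP; exists y; last by rewrite ey gfun_sc.
    rewrite inE hyS; apply/bigcupP; exists r; first by rewrite inE.
    by apply/imsetP; exists v.
  have hn : (#|B2| <= \sum_(tau in NZ) #|SS :&: line c tau|)%N.
    apply: leq_trans (subset_leq_card sub2) _; apply: leq_trans (leq_imset_card _ _) _.
    apply: leq_trans (card_bigcup_le _ _); apply: subset_leq_card.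
    apply/subsetP => y /setIP [hy /bigcupP [tau ht hl]]; apply/bigcupP; exists tau => //.
    by rewrite inE hy hl.
  rewrite -(ler_nat R) natr_sum in hn; apply: le_trans hn _.
  apply: le_trans (_ : \sum_(tau in NZ) (eps * nR + 2 + 2 * (kappa * nR)) <= _).
    apply: ler_sum => tau; rewrite inE => ht.
    have a1 := h4 c tau ht.
    have a2 : (#|C :&: line c tau| <= #|conf :&: line c tau|)%N by apply: subset_leq_card; exact: setSI.
    rewrite -(ler_nat R) in a2.
    have a3 := Hline c ht.
    lra.
  by rewrite sumr_const card_NZ [X in _ <= X]mulr_natl.
have hSS : #|SS|%:R <= 8 * (nR * (nR * (kappa * nR))).
  have a1 : (#|SS| <= 8 * #|C|)%N.
    apply: leq_trans (card_bigcup_le _ _) _.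
    apply: leq_trans (_ : (\sum_(c0 in C) 8 <= _)%N); last by rewrite sum_nat_const mulnC.
    apply: leq_sum => c0 _; exact: card_cube.
  have a2 : (#|C| <= #|conf|)%N by exact: subset_leq_card.
  have a3 := conf_tot.
  rewrite -(ler_nat R) natrM in a1; rewrite -(ler_nat R) in a2.
  lra.
have M3 : 0 < theta * nR ^+ 2 by rewrite mulr_gt0 // exprn_gt0 // nR_gt0.
have hB3 : #|B3|%:R * (theta * nR ^+ 2) <= 7 * (8 * (nR * (nR * (kappa * nR)))).
  have a1 : (#|B3| <= \sum_(l in NZ) #|F3 l|)%N by exact: card_bigcup_le.
  rewrite -(ler_nat R) natr_sum in a1.
  apply: le_trans (ler_wpM2r (ltW M3) a1) _; rewrite mulr_suml.
  apply: le_trans (_ : \sum_(l in NZ) (8 * (nR * (nR * (kappa * nR)))) <= _); last first.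
    by rewrite sumr_const card_NZ [X in _ <= X]mulr_natl.
  apply: ler_sum => l hl; apply: le_trans hSS.
  apply: (sum_fiber_le (f := fun y => vadd (lam l c) (lam l y))
                      (B := fun v => SS :&: pl l (vadd (lam l c) v))).
    move=> v; apply/subsetP => y; rewrite !inE => /andP [-> /eqP ->]; by rewrite vaddK eqxx.
  by move=> v; rewrite inE.
have M4 : 0 < eps * nR by rewrite mulr_gt0 // nR_gt0.
have hB4 : #|B4|%:R * (eps * nR) <= 21 * (theta * nR ^+ 2 + 4 + 4 * (nR * (kappa * nR))).
  set M' := theta * nR ^+ 2 + 4 + 4 * (nR * (kappa * nR)).
  have a1 : (#|B4| <= \sum_(tau in NZ) \sum_(s in R3 tau) #|F4 tau s|)%N.
    apply: leq_trans (card_bigcup_le _ _) _; apply: leq_sum => tau _; exact: card_bigcup_le.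
  rewrite -(ler_nat R) natr_sum in a1.
  apply: le_trans (ler_wpM2r (ltW M4) a1) _; rewrite mulr_suml.
  apply: le_trans (_ : \sum_(tau in NZ) (M' *+ #|R3 tau|) <= _); last first.
    by rewrite sumrMnr sum_R3 [X in _ <= X]mulr_natl.
  apply: ler_sum => tau; rewrite inE => ht; rewrite natr_sum mulr_suml -sumr_const.
  apply: ler_sum => s hs.
  set P := pl (cross s tau) (lam (cross s tau) c).
  have hcr := R3_cross ht hs.
  apply: le_trans (_ : #|SS :&: P|%:R <= _).
    apply: (sum_fiber_le (f := fun y => odflt v0 [pick v | y \in line (xadd c (sc s v)) tau])
                        (B := fun v => SS :&: line (xadd c (sc s v)) tau)).
      move=> v; apply/subsetP => y /setIP [hy hyl].
      rewrite !in_setI hy (subsetP (R3_line_pl c v hs) _ hyl) /= inE.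
      case: pickP => [v' hv' | hn] /=; first by rewrite (R3_lines_disj ht hs hv' hyl).
      by have := hn v; rewrite hyl.
    by move=> v; rewrite inE.
  have b1 := h5 _ (lam (cross s tau) c) hcr.
  have b2 : (#|C :&: P| <= #|conf :&: P|)%N by apply: subset_leq_card; exact: setSI.
  rewrite -(ler_nat R) in b2.
  have b3 := pl_conf (lam (cross s tau) c) hcr.
  rewrite /M'; move: b1; rewrite -/P => b1; lra.
have hGb' : #|G|%:R <= #|B2|%:R + #|B3|%:R + #|B4|%:R :> R by rewrite -!natrD ler_nat.
have hGn' : #|G|%:R <= nR :> R by rewrite ler_nat.
have Hm := Hmain; have Ht := Hth; have He := Heps; have Hn := Hen.
exfalso; exact: (arith Ht He nR_gt0 Hn Hm hK1 hG hGn' hGb' hB2 hB3 hB4).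
Qed.

Lemma iter_state k : exists C d, valid C d /\ ((k <= #|C|)%N \/ conf \subset S C d).
Proof.
elim: k => [|k [C [d [hV hk]]]].
  by exists set0, (fun=> v0); split; [exact: valid0 | left].
case: (boolP (conf \subset S C d)) => hs; first by exists C, d; split => //; right.
case: hk => [hk|]; last by rewrite (negbTE hs).
have [c hc cS] : exists2 c, c \in conf & c \notin S C d by move/subsetPn: hs.
have [v [hv hg hd E3 E4]] := exists_ok hV hc cS.
exists (c |: C), (fun y => if y == c then v else d y); split; first exact: valid_ext.
left; rewrite cardsU1.
have -> : c \notin C by apply: contra cS => hcC; apply: (subsetP (mem_S d hcC)); exact: cube_self.
by rewrite add1n ltnS.
Qed.

Lemma core_main : exists C d, valid C d /\ conf \subset S C d.
Proof.
have [C [d [hV [hk|hs]]]] := iter_state (#|conf|.+1); last by exists C, d.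
have [h1 _ _ _ _] := hV.
by have := subset_leq_card h1; rewrite leqNgt hk.
Qed.
End Core.

Module P5.

Section Link.
Variables (t : nat) (L : latin_fun (2 ^ t)) (A : set_cube (2 ^ t)) (p1 p2 p3 s : {perm 'I_(2 ^ t)}).
Hypothesis HB : forall i j k, L (p1 i) (p2 j) (p3 k) = s (boolean_cube i j k).

Local Notation V := {ffun 'I_t -> bool}.
Local Notation X := (V * V * V)%type.
Local Notation v0 := (@v0 t).
Local Notation xadd := (@xadd t).
Local Notation sc := (@sc t).
Local Notation cube := (@cube t).
Local Notation line := (@line t).
Local Notation lam := (@lam t).
Local Notation pl := (@pl t).
Local Notation bsum := (@bsum t).
Local Notation ib := (@ib t).

Definition phi (x : X) : cell (2 ^ t) := (p1 (ib x.1.1), p2 (ib x.1.2), p3 (ib x.2)).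
Definition phii (e : cell (2 ^ t)) : X :=
  (bits ((p1^-1)%g (ci e)), bits ((p2^-1)%g (cj e)), bits ((p3^-1)%g (ck e))).
Definition sig (u : V) : 'I_(2 ^ t) := s (ib u).

Lemma phiK : cancel phi phii.
Proof. by case=> [[a b] c]; rewrite /phi /phii /ci /cj /ck /= !permK !bits_ib. Qed.
Lemma phiiK : cancel phii phi.
Proof. by case=> [[i j] k]; rewrite /phi /phii /ci /cj /ck /= !ib_bits !permKV. Qed.
Lemma phi_inj : injective phi. Proof. exact: can_inj phiK. Qed.
Lemma sig_inj : injective sig.
Proof. by move=> a b /perm_inj /ib_inj. Qed.

Lemma Lib a b c : L (p1 (ib a)) (p2 (ib b)) (p3 (ib c)) = sig (bsum (a, b, c)).
Proof.
rewrite HB /sig; congr (s _); apply: bits_inj; by rewrite bc_bits !bits_ib.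
Qed.

Lemma Lphi x : Lat L (phi x) = sig (bsum x).
Proof. by case: x => [[a b] c]; exact: Lib. Qed.

Lemma Lat_gen e : Lat L e = sig (bsum (phii e)).
Proof. by rewrite -{1}(phiiK e) Lphi. Qed.

Lemma mem_phi_cube c v y : (phi y \in phi @: cube c v) = (y \in cube c v).
Proof. exact: mem_imset phi_inj. Qed.

Lemma mem_cube_coord (c y : X) v : (y \in cube c v) =
  [&& (y.1.1 == c.1.1) || (y.1.1 == vadd c.1.1 v), (y.1.2 == c.1.2) || (y.1.2 == vadd c.1.2 v) &
      (y.2 == c.2) || (y.2 == vadd c.2 v)].
Proof.
apply/imsetP/idP => [[r _ ->]|].
  by case: c => [[c1 c2] c3]; case: r => [[[] []] []]; rewrite /xadd /sc /= ?vadd0 !eqxx ?orbT.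
case: c y => [[c1 c2] c3] [[y1 y2] y3] /= /and3P [h1 h2 h3].
exists (y1 != c1, y2 != c2, y3 != c3) => //.
rewrite /xadd /sc /=; congr (_, _, _).
- by case: eqP h1 => [->|_] /=; [rewrite vadd0 | move/eqP].
- by case: eqP h2 => [->|_] /=; [rewrite vadd0 | move/eqP].
- by case: eqP h3 => [->|_] /=; [rewrite vadd0 | move/eqP].
Qed.

Lemma cube_cells_eq a b c v :
  cube_cells (p1 (ib a)) (p1 (ib (vadd a v))) (p2 (ib b)) (p2 (ib (vadd b v)))
             (p3 (ib c)) (p3 (ib (vadd c v))) = phi @: cube (a, b, c) v.
Proof.
apply/setP => e; rewrite -(phiiK e) mem_phi_cube mem_cube_coord inE.
case: (phii e) => [[y1 y2] y3]; rewrite /phi /ci /cj /ck /= !(inj_eq perm_inj) !(inj_eq (@ib_inj t)). by rewrite andbA.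
Qed.

Lemma vadd_neq a v : v != v0 -> vadd a v != a.
Proof.
move=> hv; apply: contra hv => /eqP e; apply/eqP.
by rewrite -(vaddK a v) e vaddvv.
Qed.

Lemma cube_3cube c v : v != v0 -> is_3cube L (phi @: cube c v).
Proof.
move=> hv; case: c => [[a b] c].
apply/existsP; exists (p1 (ib a)); apply/existsP; exists (p1 (ib (vadd a v))).
apply/existsP; exists (p2 (ib b)); apply/existsP; exists (p2 (ib (vadd b v))).
apply/existsP; exists (p3 (ib c)); apply/existsP; exists (p3 (ib (vadd c v))).
rewrite !(inj_eq perm_inj) !(inj_eq (@ib_inj t)) !(eq_sym _ (vadd _ v)) !vadd_neq //.
rewrite cube_cells_eq eqxx !Lib /=.
by repeat (apply/andP; split); apply/eqP; congr sig; rewrite /bsum /=; vtac.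
Qed.

Lemma p_ib (p : {perm 'I_(2 ^ t)}) i : exists a, i = p (ib a).
Proof. by exists (bits ((p^-1)%g i)); rewrite ib_bits permKV. Qed.

Lemma char_3cube Q : is_3cube L Q -> exists c v, v != v0 /\ Q = phi @: cube c v.
Proof.
case/existsP => i1 /existsP [i2 /existsP [j1 /existsP [j2 /existsP [k1 /existsP [k2]]]]].
have [a1 ->] := p_ib p1 i1; have [a2 ->] := p_ib p1 i2.
have [b1 ->] := p_ib p2 j1; have [b2 ->] := p_ib p2 j2.
have [c1 ->] := p_ib p3 k1; have [c2 ->] := p_ib p3 k2.
rewrite !(inj_eq perm_inj) !(inj_eq (@ib_inj t)) !Lib.
case/and4P => ha hb hc /and4P [/eqP hQ e1 e2 _].
move/eqP/sig_inj: e1 => e1; move/eqP/sig_inj: e2 => e2.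
have ea : a2 = vadd a1 (vadd a1 a2) by rewrite vaddK.
have eb : b2 = vadd b1 (vadd a1 a2).
  apply/ffunP => i; have := congr1 (fun f : V => f i) e1; rewrite /bsum /= !ffunE; by bcase.
have ec : c2 = vadd c1 (vadd a1 a2).
  apply/ffunP => i; have := congr1 (fun f : V => f i) e2; have := congr1 (fun f : V => f i) eb.
  rewrite /bsum /= !ffunE; by bcase.
exists (a1, b1, c1), (vadd a1 a2); split; first by rewrite vadd_eq0.
by rewrite hQ {1}ea eb ec cube_cells_eq.
Qed.

Lemma swap_val_cube c v y : v != v0 -> y \in cube c v ->
  swap_val L (phi @: cube c v) (phi y) = sig (vadd (bsum y) v).
Proof.
move=> hv hy.
rewrite /swap_val mem_phi_cube hy Lphi.
have ec := cube_shift hy.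
have key : forall z, (z \in [set Lat L d | d in phi @: cube c v] :\ sig (bsum y)) =
                     (z == sig (vadd (bsum y) v)).
  move=> z; apply/idP/idP.
  - rewrite !inE => /andP [hz /imsetP [e /imsetP [y' hy' ->] ez]].
    rewrite -ec in hy'; case/imsetP: hy' => r _ ey'.
    move: hz; rewrite ez ey' Lphi bsum_add bsum_sc; case: (par r) => //.
    by rewrite vadd0 eqxx.
  - move/eqP => ->; rewrite !inE (inj_eq sig_inj) vadd_neq //=.
    apply/imsetP; exists (phi (xadd y (sc (true,false,false) v))).
      apply/imsetP; exists (xadd y (sc (true,false,false) v)) => //.
      by rewrite -ec; apply/imsetP; exists (true,false,false).
    by rewrite Lphi bsum_add bsum_sc.
case: pickP => [z hz|hn] /=; first by move: hz; rewrite key => /eqP.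
by have := hn (sig (vadd (bsum y) v)); rewrite key eqxx.
Qed.

Definition goodX (c : X) (v : V) :=
  [forall y, (y \in cube c v) ==> (sig (vadd (bsum y) v) \notin Aat A (phi y))].

Lemma allowed_good c v : v != v0 -> allowed L A (phi @: cube c v) = goodX c v.
Proof.
move=> hv; rewrite /allowed cube_3cube //=; apply/forallP/forallP => H y.
- apply/implyP => hy; have := H (phi y); by rewrite mem_phi_cube hy /= swap_val_cube.
- apply/implyP => /imsetP [y' hy' ->]; have := H y'; by rewrite hy' /= swap_val_cube.
Qed.

Lemma count_allowed c : (#|[set Q | allowed L A Q && (phi c \in Q)]| <=
   #|[set v | (v != v0) && goodX c v]|)%N.
Proof.
apply: leq_trans (_ : #|(fun v => phi @: cube c v) @: [set v | (v != v0) && goodX c v]| <= _)%N;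
  last exact: leq_imset_card.
apply: subset_leq_card; apply/subsetP => Q; rewrite inE => /andP [hA hc].
have [c0 [v [hv eQ]]] := char_3cube (andP hA).1.
move: hc; rewrite eQ mem_phi_cube => hc; have ecube := cube_shift hc.
apply/imsetP; exists v; last by rewrite ecube.
by rewrite inE hv /= -allowed_good // ecube -eQ.
Qed.

Definition confX := [set x | phi x \in conflicts L A].

Lemma line_sub x tau (Y : {set cell (2 ^ t)}) : phi @: line x tau \subset Y ->
  (#|confX :&: line x tau| <= #|Y :&: conflicts L A|)%N.
Proof.
move=> hY; rewrite -(card_imset _ phi_inj); apply: subset_leq_card.
apply/subsetP => e /imsetP [y /setIP [hy hl] ->]; rewrite inE (subsetP hY) ?imset_f //.
by move: hy; rewrite inE.
Qed.

Ltac lsub := apply/subsetP => e /imsetP [y /imsetP [w _ ->] ->];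
  rewrite !inE ?Lphi ?bsum_add ?bsum_sc /= ?vadd0 ?eqxx /phi /ci /cj /ck /xadd /sc /= ?vadd0 ?eqxx ?andbT.

Lemma sub_010 x : phi @: line x (false,true,false) \subset row_set (p1 (ib x.1.1)) (p3 (ib x.2)).
Proof. by lsub. Qed.
Lemma sub_100 x : phi @: line x (true,false,false) \subset col_set (p2 (ib x.1.2)) (p3 (ib x.2)).
Proof. by lsub. Qed.
Lemma sub_001 x : phi @: line x (false,false,true) \subset file_set (p1 (ib x.1.1)) (p2 (ib x.1.2)).
Proof. by lsub. Qed.
Lemma sub_110 x : phi @: line x (true,true,false) \subset
  [set e in file_layer (p3 (ib x.2)) | Lat L e == sig (bsum x)].
Proof. by lsub. Qed.
Lemma sub_101 x : phi @: line x (true,false,true) \subset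
  [set e in col_layer (p2 (ib x.1.2)) | Lat L e == sig (bsum x)].
Proof. by lsub. Qed.
Lemma sub_011 x : phi @: line x (false,true,true) \subset
  [set e in row_layer (p1 (ib x.1.1)) | Lat L e == sig (bsum x)].
Proof. by lsub. Qed.

Lemma trans_set x : is_transversal_set L (phi @: line x (true,true,true)).
Proof.
set tau : B3 := (true,true,true).
have scinj : injective (fun w => xadd x (sc tau w)).
  by move=> w w' /xadd_inj [e _ _].
split.
  rewrite (card_imset _ phi_inj) (card_imset _ scinj); exact: card_V.
split.
  move=> c d /imsetP [y /imsetP [w _ ->] ->] /imsetP [y' /imsetP [w' _ ->] ->] hne.
  have ww : w != w' by apply: contra hne => /eqP ->.
  rewrite !Lphi !bsum_add !bsum_sc /= (inj_eq sig_inj) (inj_eq (@vadd_inj t _)) ww.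
  rewrite /phi /ci /cj /ck /xadd /sc /= !(inj_eq perm_inj) !(inj_eq (@ib_inj t)).
  by rewrite !(inj_eq (@vadd_inj t _)) (negbTE ww).
move=> c d /imsetP [y /imsetP [w _ ey] ec] /imsetP [y' /imsetP [w' _ ey'] ed] hne.
subst c d y y'.
have ww : w != w' by apply: contra hne => /eqP ->.
have hv : vadd w w' != v0 by rewrite vadd_eq0.
set c0 := xadd x (sc tau w).
have d_in : xadd x (sc tau w') \in cube c0 (vadd w w').
  by apply/imsetP; exists tau => //; rewrite /c0 -xaddA -sc_addv vaddK.
have -> : [set Q | is_3cube L Q && (phi c0 \in Q) && (phi (xadd x (sc tau w')) \in Q)] =
          [set phi @: cube c0 (vadd w w')].
  apply/setP => Q; rewrite !inE; apply/idP/eqP.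
    case/andP => /andP [h3 hcQ] hdQ.
    have [c1 [v [hv1 eQ]]] := char_3cube h3.
    rewrite eQ mem_phi_cube in hcQ; rewrite eQ mem_phi_cube in hdQ.
    have e1 := cube_shift hcQ; rewrite -e1 in hdQ; case/imsetP: hdQ => r _ er.
    have er' : sc r v = sc tau (vadd w w').
      have -> : sc r v = xadd c0 (xadd x (sc tau w')) by rewrite er xaddK.
      by rewrite /c0 sc_addv xaddKl.
    have := sc_eqP hv1 (isT : tau != b0) er'.
    rewrite (negbTE hv) andbF /= => /andP [_ /eqP ev].
    by rewrite eQ -e1 ev.
  move=> ->; rewrite cube_3cube // mem_phi_cube cube_self /=.
  by rewrite mem_phi_cube d_in.
exact: cards1.
Qed.
End Link.


End P5.
Import P5.

Lemma transfer n (L L' : latin_fun n) (G : cell n -> cell n) (P : pred (cell n)) x :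
  involutive G -> (forall e, P (G e) = P e) -> (forall e, Lat L (G e) = Lat L' e) ->
  #|[set c | P c && (Lat L' c == x)]| = #|[set c | P c && (Lat L c == x)]|.
Proof.
move=> hG hP hL.
have -> : [set c | P c && (Lat L' c == x)] = G @^-1: [set c | P c && (Lat L c == x)].
  by apply/setP => e; rewrite !inE hP hL.
exact: card_preimset (inv_inj hG).
Qed.

Section Fin.
Variables (t : nat) (L : latin_fun (2 ^ t)) (A : set_cube (2 ^ t)) (p1 p2 p3 s : {perm 'I_(2 ^ t)}).
Hypothesis HB : forall i j k, L (p1 i) (p2 j) (p3 k) = s (boolean_cube i j k).
Local Notation V := {ffun 'I_t -> bool}.
Local Notation X := (V * V * V)%type.
Local Notation v0 := (@v0 t).
Local Notation xadd := (@xadd t).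
Local Notation sc := (@sc t).
Local Notation cube := (@cube t).
Local Notation bsum := (@bsum t).
Local Notation ib := (@ib t).
Local Notation phi := (phi p1 p2 p3).
Local Notation phii := (phii p1 p2 p3).
Local Notation sig := (sig s).
Local Notation goodX := (goodX A p1 p2 p3 s).
Local Notation confX := (confX L A p1 p2 p3).
Local Notation phiiK := (P5.phiiK p1 p2 p3).
Local Notation phiK := (P5.phiK p1 p2 p3).
Local Notation mem_phi_cube := (P5.mem_phi_cube p1 p2 p3).

Variables (C : {set X}) (d : X -> V).
Hypothesis h2 : forall c, c \in C -> (d c != v0) && goodX c (d c).
Hypothesis h3 : forall c c', c \in C -> c' \in C -> c != c' -> [disjoint cube c (d c) & cube c' (d c')].
Hypothesis hcov : confX \subset S C d.

Definition F := [set phi @: cube c (d c) | c in C].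
Definition D (y : X) : V := if [pick c | (c \in C) && (y \in cube c (d c))] is Some c then d c else v0.

Lemma D_spec c y : c \in C -> y \in cube c (d c) -> D y = d c.
Proof.
move=> hc hy; rewrite /D; case: pickP => [c' /andP [hc' hy'] | hn].
  case: (eqVneq c' c) => [-> // | ne].
  have := h3 hc' hc ne; rewrite -setI_eq0 => /eqP/setP/(_ y); by rewrite !inE hy' hy.
by have := hn c; rewrite hc hy.
Qed.

Lemma D_none y : (forall c, c \in C -> y \notin cube c (d c)) -> D y = v0.
Proof.
move=> H; rewrite /D; case: pickP => [c /andP [hc hy] | //].
by have := H c hc; rewrite hy.
Qed.

Lemma D_cases y : (exists2 c, c \in C & y \in cube c (d c)) \/ (forall c, c \in C -> y \notin cube c (d c)).
Proof.
case: (pickP (fun c => (c \in C) && (y \in cube c (d c)))) => [c /andP [hc hy]|hn].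
  by left; exists c.
by right => c hc; have := hn c; rewrite hc /= => ->.
Qed.

Lemma D_shift y r : D (xadd y (sc r (D y))) = D y.
Proof.
case: (D_cases y) => [[c hc hy]|hn].
  rewrite (D_spec hc hy); apply: D_spec => //.
  by rewrite -(cube_shift hy); apply/imsetP; exists r.
by rewrite (D_none hn) sc_v0 xadd0 (D_none hn).
Qed.

Lemma sw y : swap_all L F (p1 (ib y.1.1)) (p2 (ib y.1.2)) (p3 (ib y.2)) = sig (vadd (bsum y) (D y)).
Proof.
rewrite /swap_all /=; case: pickP => [Q /andP [hQ hyQ] | hn].
  case/imsetP: hQ => c hc eQ.
  have hy : y \in cube c (d c) by rewrite -mem_phi_cube -eQ.
  have /andP [hd _] := h2 hc.
  by rewrite eQ (swap_val_cube HB hd hy) (D_spec hc hy).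
rewrite (_ : D y = v0) ?vadd0; first by rewrite (Lphi HB y).
apply: D_none => c hc; apply/negP => hy.
have := hn (phi @: cube c (d c)); by rewrite imset_f //= mem_phi_cube hy.
Qed.

Lemma Lat_sw e : Lat (swap_all L F) e = sig (vadd (bsum (phii e)) (D (phii e))).
Proof. by rewrite -{1}(phiiK e); exact: sw. Qed.

Definition G (r : B3) (e : cell (2 ^ t)) := phi (xadd (phii e) (sc r (D (phii e)))).

Lemma G_invol r : involutive (G r).
Proof.
move=> e; rewrite /G phiK D_shift xaddKr; exact: phiiK.
Qed.

Lemma Lat_G r e : par r -> Lat L (G r e) = Lat (swap_all L F) e.
Proof. by move=> hr; rewrite /G (Lphi HB) bsum_add bsum_sc hr Lat_sw. Qed.

Lemma G_ci r e : r.1.1 = false -> ci (G r e) = ci e.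
Proof. by move=> h; rewrite -[X in _ = ci X](phiiK e) /G /phi /ci /xadd /sc h /= vadd0. Qed.
Lemma G_cj r e : r.1.2 = false -> cj (G r e) = cj e.
Proof. by move=> h; rewrite -[X in _ = cj X](phiiK e) /G /phi /cj /xadd /sc h /= vadd0. Qed.
Lemma G_ck r e : r.2 = false -> ck (G r e) = ck e.
Proof. by move=> h; rewrite -[X in _ = ck X](phiiK e) /G /phi /ck /xadd /sc h /= vadd0. Qed.

Lemma latin_sw : is_latin L -> is_latin (swap_all L F).
Proof.
case=> hr [hc hf]; split; [|split].
- move=> x i k; apply: etrans (hr x i k).
  apply: (@transfer _ L (swap_all L F) (G (false,true,false)) (fun c => c \in row_set i k) x); [exact: G_invol | | by move=> e; apply: Lat_G].
  by move=> e; rewrite !inE G_ci // G_ck.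
- move=> x j k; apply: etrans (hc x j k).
  apply: (@transfer _ L (swap_all L F) (G (true,false,false)) (fun c => c \in col_set j k) x); [exact: G_invol | | by move=> e; apply: Lat_G].
  by move=> e; rewrite !inE G_cj // G_ck.
- move=> x i j; apply: etrans (hf x i j).
  apply: (@transfer _ L (swap_all L F) (G (false,false,true)) (fun c => c \in file_set i j) x); [exact: G_invol | | by move=> e; apply: Lat_G].
  by move=> e; rewrite !inE G_ci // G_cj.
Qed.

Lemma avoids_sw : avoids (swap_all L F) A.
Proof.
apply/setP => e; rewrite !inE Lat_sw.
have -> : Aat A e = Aat A (phi (phii e)) by rewrite phiiK.
move: (phii e) => y.
case: (D_cases y) => [[c hc hy]|hn].
  rewrite (D_spec hc hy); have /andP [_ /forallP /(_ y)] := h2 hc.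
  by rewrite hy /= => /negbTE.
rewrite (D_none hn) vadd0 -(Lphi HB); apply/negbTE.
have : y \notin S C d.
  apply/bigcupP => -[c hc hy]; by have := hn c hc; rewrite hy.
apply: contra => hA; apply: (subsetP hcov); by rewrite inE inE.
Qed.

Lemma disj_phi (B1 B2 : {set X}) : [disjoint B1 & B2] -> [disjoint phi @: B1 & phi @: B2].
Proof.
rewrite -!setI_eq0 => /eqP h; rewrite -imsetI ?h ?imset0 //.
by move=> a b _ _; exact: phi_inj.
Qed.

Lemma F_props :
    [/\ (forall Q, Q \in F -> allowed L A Q),
        (forall Q Q', Q \in F -> Q' \in F -> Q != Q' -> [disjoint Q & Q']) &
        (forall c, c \in conflicts L A -> exists2 Q, Q \in F & c \in Q)].
Proof.
split.
- move=> Q /imsetP [c hc ->]; have /andP [hd hg] := h2 hc.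
  by rewrite (allowed_good A HB) //.
- move=> Q Q' /imsetP [c hc ->] /imsetP [c' hc' ->] ne.
  apply: disj_phi; apply: h3 => //; by apply: contra ne => /eqP ->.
- move=> e he.
  have : phii e \in S C d by apply: (subsetP hcov); rewrite inE phiiK.
  case/bigcupP => c hc hy; exists (phi @: cube c (d c)); first exact: imset_f.
  by rewrite -(phiiK e) mem_phi_cube.
Qed.
End Fin.

Local Open Scope ring_scope.

Theorem mainTheorem3 (R : realType) (t m : nat)
  (L : latin_fun (2 ^ t)) (A : set_cube (2 ^ t))
  (alpha gamma kappa theta eps : R) :
  is_latin L -> iso_boolean L -> mmmm_cube m A ->
  0 < theta -> 0 < eps ->
  3 <= eps * (2 ^ t)%:R ->
  0 < alpha * (2 ^ t)%:R - 21 * kappa * (2 ^ t)%:R - 7 * eps * (2 ^ t)%:R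
        - 84 * kappa / eps * (2 ^ t)%:R - 21 * theta / eps * (2 ^ t)%:R
        - 80 * kappa / theta * (2 ^ t)%:R - 28 ->
  (forall i k : 'I_(2 ^ t),
     #|row_set i k :&: conflicts L A|%:R <= kappa * (2 ^ t)%:R) ->
  (forall j k : 'I_(2 ^ t),
     #|col_set j k :&: conflicts L A|%:R <= kappa * (2 ^ t)%:R) ->
  (forall i j : 'I_(2 ^ t),
     #|file_set i j :&: conflicts L A|%:R <= kappa * (2 ^ t)%:R) ->
  (forall l x : 'I_(2 ^ t),
     [/\ #|[set c in row_layer l | Lat L c == x] :&: conflicts L A|%:R <= kappa * (2 ^ t)%:R,
         #|[set c in col_layer l | Lat L c == x] :&: conflicts L A|%:R <= kappa * (2 ^ t)%:R &
         #|[set c in file_layer l | Lat L c == x] :&: conflicts L A|%:R <= kappa * (2 ^ t)%:R]) ->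
  (forall T : {set cell (2 ^ t)}, is_transversal_set L T ->
     #|T :&: conflicts L A|%:R <= kappa * (2 ^ t)%:R) ->
  (forall c : cell (2 ^ t),
     alpha * (2 ^ t)%:R <= #|[set Q : {set cell (2 ^ t)} | allowed L A Q && (c \in Q)]|%:R) ->
  exists F : {set {set cell (2 ^ t)}},
    [/\ (forall Q, Q \in F -> allowed L A Q),
        (forall Q Q', Q \in F -> Q' \in F -> Q != Q' -> [disjoint Q & Q']),
        (forall c, c \in conflicts L A -> exists2 Q, Q \in F & c \in Q),
        is_latin (swap_all L F) &
        avoids (swap_all L F) A].
Proof.
move=> HL [p1 [p2 [p3 [s HB]]]] _ Hth Heps Hen Hmain Ha Hb Hc Hd He Hf.
have Hline : forall x tau, tau != b0 ->
    #|confX L A p1 p2 p3 :&: line x tau|%:R <= kappa * (2 ^ t)%:R :> R.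
  move=> x; case=> [[[] []] []] // _.
  - apply: le_trans (He _ (trans_set HB x)); rewrite ler_nat; apply: line_sub; exact: subxx.
  - case: (Hd (p3 (ib x.2)) (sig s (bsum x))) => _ _ h; apply: le_trans h; rewrite ler_nat.
    apply: line_sub; exact: (sub_110 HB x).
  - case: (Hd (p2 (ib x.1.2)) (sig s (bsum x))) => _ h _; apply: le_trans h; rewrite ler_nat.
    apply: line_sub; exact: (sub_101 HB x).
  - apply: le_trans (Hb (p2 (ib x.1.2)) (p3 (ib x.2))); rewrite ler_nat.
    apply: line_sub; exact: sub_100.
  - case: (Hd (p1 (ib x.1.1)) (sig s (bsum x))) => h _ _; apply: le_trans h; rewrite ler_nat.
    apply: line_sub; exact: (sub_011 HB x).
  - apply: le_trans (Ha (p1 (ib x.1.1)) (p3 (ib x.2))); rewrite ler_nat.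
    apply: line_sub; exact: sub_010.
  - apply: le_trans (Hc (p1 (ib x.1.1)) (p2 (ib x.1.2))); rewrite ler_nat.
    apply: line_sub; exact: sub_001.
have Hgood : forall c, c \in confX L A p1 p2 p3 ->
    alpha * (2 ^ t)%:R <= #|[set v | (v != v0 t) && goodX A p1 p2 p3 s c v]|%:R.
  move=> c _; apply: le_trans (Hf (phi p1 p2 p3 c)) _; rewrite ler_nat; exact: (count_allowed A HB c).
have [C [d [[h1 h2 h3 _ _] hcov]]] := core_main Hline Hth Heps Hen Hgood Hmain.
exists (F p1 p2 p3 C d).
have [f1 f2 f3] := F_props HB h2 h3 hcov.
split => //; [exact: (latin_sw HB h2 h3 HL) | exact: (avoids_sw HB h2 h3 hcov)].
Qed.
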